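(* Let $k$ be a field of characteristic different from $2$, and let $(S,E)$ and $(S',E')$ be finite simple graphs. If the Lie algebras $\mathfrak{n}(S,E)$ and $\mathfrak{n}(S',E')$ over $k$ are isomorphic as Lie algebras, then the graphs $(S,E)$ and $(S',E')$ are isomorphic.
   Context: A finite simple graph $(S,E)$ has finite vertex set $S$ and edge set $E$ consisting of unordered pairs $\alpha\beta$ of distinct vertices (no loops, no multiple edges). Given such a graph and a field $k$ with $\mathrm{char}(k)\neq 2$, let $V$ be the $k$-vector space with basis $S$, and let $W\subseteq \bigwedge^2 V$ be the subspace spanned by all $\alpha\wedge\beta$ with $\alpha,\beta\in S$, $\alpha\neq\beta$ and $\alpha\beta\notin E$. The Lie algebra $\mathfrak{n}(S,E)$ is the vector space $V\oplus (\bigwedge^2V)/W$ with bracket determined by $[v_1,v_2]=v_1\wedge v_2 \bmod W$ for $v_1,v_2\in V$ and $[x,y]=0$ for $x\in\mathfrak{n}(S,E)$, $y\in(\bigwedge^2V)/W$ (extended bilinearly and skew-symmetrically). It has dimension $|S|+|E|$. *)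

(* Defs.v *)
From HB Require Import structures.
From mathcomp Require Import all_boot all_order all_algebra.
Set Implicit Arguments. Unset Strict Implicit. Unset Printing Implicit Defensive.
Import Order.TTheory GRing.Theory.
Local Open Scope ring_scope.

Definition simple_graph (S : finType) (e : rel S) : Prop :=
  irreflexive e /\ symmetric e.

Definition graph_iso (S S' : finType) (e : rel S) (e' : rel S') : Prop :=
  exists sigma : S -> S', bijective sigma /\ forall a b, e' (sigma a) (sigma b) = e a b.

(* Ambient k-vector space  V x (k^(S x S)),  V = k^S with basis S.
   Lambda^2 V is identified with skew-symmetric S x S arrays
   (alpha /\ beta  <->  E_{alpha beta} - E_{beta alpha}), and the quotient
   (Lambda^2 V)/W, W = span{alpha /\ beta | alpha beta not in E}, is identified
   with the complement of W: skew arrays supported on edges. *)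
Definition namb (k : fieldType) (S : finType) : lmodType k :=
  ({ffun S -> k^o} * {ffun (S * S)%type -> k^o})%type.

(* The subspace of the ambient space realizing n(S,E) = V (+) (Lambda^2 V)/W. *)
Definition in_n (k : fieldType) (S : finType) (e : rel S) (x : namb k S) : Prop :=
  forall a b, x.2 (a, b) = - x.2 (b, a) /\ (~~ e a b -> x.2 (a, b) = 0).

(* The Lie bracket: [x, y] = x_V /\ y_V mod W (the (Lambda^2 V)/W components
   are central). *)
Definition nbr (k : fieldType) (S : finType) (e : rel S) (x y : namb k S) : namb k S :=
  (0, [ffun p : S * S => if e p.1 p.2 then x.1 p.1 * y.1 p.2 - x.1 p.2 * y.1 p.1
                         else 0]).

Definition n_lie_iso (k : fieldType) (S S' : finType) (e : rel S) (e' : rel S') : Prop :=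
  exists f : {linear namb k S -> namb k S'},
    [/\ forall x, in_n e x -> in_n e' (f x),
        forall x y, in_n e x -> in_n e y -> f x = f y -> x = y,
        forall y, in_n e' y -> exists2 x, in_n e x & f x = y
      & forall x y, in_n e x -> in_n e y -> f (nbr e x y) = nbr e' (f x) (f y)].

(* Main.v *)
Require Import Defs.
From HB Require Import structures.
From mathcomp Require Import all_boot all_order all_algebra all_fingroup ring.
Set Implicit Arguments. Unset Strict Implicit. Unset Printing Implicit Defensive.
Import Order.TTheory GRing.Theory.
Local Open Scope ring_scope.

Definition Br (k : fieldType) (T : finType) (r : rel T) (x y : {ffun T -> k^o}) :
  {ffun (T * T)%type -> k^o} :=
  [ffun p : T * T => if r p.1 p.2 then x p.1 * y p.2 - x p.2 * y p.1 else 0].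

Definition dl (k : fieldType) (T : finType) (a : T) : {ffun T -> k^o} :=
  [ffun x => (x == a)%:R].

Lemma nbrE (k : fieldType) (S : finType) (e : rel S) (x y : namb k S) :
  nbr e x y = (0, Br e x.1 y.1).
Proof. by []. Qed.

Lemma ffun_expand (k : fieldType) (T : finType) (v : {ffun T -> k^o}) :
  v = \sum_a v a *: dl k a.
Proof.
apply/ffunP=> x; rewrite sum_ffunE (bigD1 x) //= big1 ?addr0.
  by rewrite !ffunE eqxx mulr1n; apply: (esym (mulr1 _)).
by move=> a nax; rewrite !ffunE eq_sym (negPf nax) mulr0n; apply: mulr0.
Qed.

Lemma indep_le (k : fieldType) (W : vectType k) (I J : finType) (P : {set I}) (Q : {set J})
  (X : I -> W) (Y : J -> W) :
  (forall c : I -> k, \sum_(i in P) c i *: X i = 0 -> forall i, i \in P -> c i = 0) ->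
  (forall i, i \in P -> exists d : J -> k, X i = \sum_(j in Q) d j *: Y j) ->
  (#|P| <= #|Q|)%N.
Proof.
move=> Hind Hspan.
pose Xs := [seq X i | i <- enum P].
pose Ys := [seq Y j | j <- enum Q].
have sXs : size Xs = #|P| by rewrite size_map cardE.
have sYs : size Ys = #|Q| by rewrite size_map cardE.
have Xfree : free Xs.
  suff : free (in_tuple Xs) by [].
  apply/freeP => kk H i.
  have sP : size (enum P) = size Xs by rewrite size_map.
  have [x0 _] : exists x0 : I, true.
    have : (0 < size (enum P))%N by rewrite sP (leq_ltn_trans _ (ltn_ord i)).
    by case: (enum P) => [|x ?] //; exists x.
  pose kk' (n : nat) := kk (insubd i n).
  pose c x := kk' (index x (enum P)).
  have : \sum_(x in P) c x *: X x = 0.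
    rewrite -[RHS]H -big_enum /= (big_nth x0).
    rewrite [RHS](eq_bigr (fun j : 'I_(size Xs) => kk' j *: nth 0 Xs j)); last first.
      by move=> j _; rewrite /kk' valKd.
    rewrite -(big_mkord xpredT (fun j => kk' j *: nth 0 Xs j)) sP.
    apply: eq_big_nat => j /andP[_ lj].
    have lj' : (j < size (enum P))%N by rewrite sP.
    by rewrite /c index_uniq ?enum_uniq // /Xs (nth_map x0).
  move/Hind => /(_ (nth x0 (enum P) i)).
  have liP : (i < size (enum P))%N by rewrite sP.
  rewrite /c index_uniq ?enum_uniq // /kk' valKd; apply.
  by rewrite -mem_enum mem_nth.
have : (\dim <<Xs>> <= \dim <<Ys>>)%N.
  apply: dimvS; apply/span_subvP => x /mapP [i iP ->].
  rewrite mem_enum in iP; have [d ->] := Hspan i iP.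
  apply: memv_suml => j jQ; apply: memvZ; apply: memv_span.
  by apply: map_f; rewrite mem_enum.
rewrite (eqP Xfree) sXs => /leq_trans; apply.
by rewrite -sYs dim_span.
Qed.

Section Main.
Variables (k : fieldType) (S S' : finType) (e : rel S) (e' : rel S').
Hypotheses (irr : irreflexive e) (sym : symmetric e) (irr' : irreflexive e') (sym' : symmetric e').
Variable f : {linear namb k S -> namb k S'}.
Hypothesis fn : forall x, in_n e x -> in_n e' (f x).
Hypothesis finj : forall x y, in_n e x -> in_n e y -> f x = f y -> x = y.
Hypothesis fsurj : forall y, in_n e' y -> exists2 x, in_n e x & f x = y.
Hypothesis fbr : forall x y, in_n e x -> in_n e y -> f (nbr e x y) = nbr e' (f x) (f y).
Hypothesis two : (2%:R : k) != 0.

Definition phiF (v : {ffun S -> k^o}) : {ffun S' -> k^o} := (f (v, 0)).1.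
Definition psiF (z : {ffun (S * S)%type -> k^o}) : {ffun (S' * S')%type -> k^o} := (f (0, z)).2.

Lemma pairV (a : k) (v w : {ffun S -> k^o}) :
  ((a *: v + w, 0) : namb k S) = a *: (v, 0) + (w, 0).
Proof.
have -> : a *: ((v, 0) : namb k S) + (w, 0) = (a *: v + w, a *: 0 + 0) := erefl.
by rewrite scaler0 addr0.
Qed.

Lemma phi_lin a v w : phiF (a *: v + w) = a *: phiF v + phiF w.
Proof. by rewrite /phiF pairV linearP. Qed.

Lemma phi0 : phiF 0 = 0.
Proof. by rewrite /phiF (_ : (0, 0) = 0) // linear0. Qed.

Lemma psi_lin a z w : psiF (a *: z + w) = a *: psiF z + psiF w.
Proof.
rewrite /psiF.
have -> : ((0, a *: z + w) : namb k S) = a *: (0, z) + (0, w).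
  have -> : a *: ((0, z) : namb k S) + (0, w) = (a *: 0 + 0, a *: z + w) := erefl.
  by rewrite scaler0 addr0.
by rewrite linearP.
Qed.

Definition g1F (z : {ffun (S * S)%type -> k^o}) : {ffun S' -> k^o} := (f (0, z)).1.
Lemma g1_lin a z w : g1F (a *: z + w) = a *: g1F z + g1F w.
Proof.
rewrite /g1F.
have -> : ((0, a *: z + w) : namb k S) = a *: (0, z) + (0, w).
  have -> : a *: ((0, z) : namb k S) + (0, w) = (a *: 0 + 0, a *: z + w) := erefl.
  by rewrite scaler0 addr0.
by rewrite linearP.
Qed.

End Main.

Lemma lin0 (R : pzRingType) (A B : lmodType R) (h : A -> B) :
  (forall a x y, h (a *: x + y) = a *: h x + h y) -> h 0 = 0.
Proof.
move=> H; have := H 1 0 0; rewrite scale1r addr0 scale1r.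
by move/(congr1 (fun t => t - h 0)); rewrite subrr addrK => <-.
Qed.

Lemma lin_sum (R : pzRingType) (A B : lmodType R) (h : A -> B) :
  (forall a x y, h (a *: x + y) = a *: h x + h y) ->
  forall (I : Type) (s : seq I) (P : pred I) (c : I -> R) (x : I -> A),
  h (\sum_(i <- s | P i) c i *: x i) = \sum_(i <- s | P i) c i *: h (x i).
Proof.
move=> H I s P c x; elim/big_rec2: _ => [|i u v _ <-]; first exact: lin0.
by rewrite H.
Qed.

Lemma linZ (R : pzRingType) (A B : lmodType R) (h : A -> B) :
  (forall a x y, h (a *: x + y) = a *: h x + h y) -> forall a x, h (a *: x) = a *: h x.
Proof. by move=> H a x; rewrite -[a *: x]addr0 H (lin0 H) addr0. Qed.

Lemma sum_delta (k : fieldType) (T : finType) (F : T -> k) (j : T) :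
  \sum_i F i * (i == j)%:R = F j.
Proof.
rewrite (bigD1 j) //= eqxx mulr1 big1 ?addr0 // => i /negPf ->.
by rewrite mulr0.
Qed.

Section BrLemmas.
Variables (k : fieldType) (T : finType) (r : rel T).
Hypotheses (irr : irreflexive r) (sym : symmetric r).

Definition skewsupp (z : {ffun (T * T)%type -> k^o}) :=
  forall p q, z (p, q) = - z (q, p) /\ (~~ r p q -> z (p, q) = 0).

Lemma BrE (x y : {ffun T -> k^o}) p q : Br r x y (p, q) = if r p q then x p * y q - x q * y p else 0.
Proof. by rewrite ffunE. Qed.

Lemma Br_skew (x y : {ffun T -> k^o}) : skewsupp (Br r x y).
Proof.
move=> p q; rewrite !BrE (sym q p); split; last by move/negPf->.
by case: (r p q); rewrite ?oppr0 ?opprB.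
Qed.

Lemma skew0 : skewsupp 0.
Proof. by move=> p q; rewrite !ffunE oppr0. Qed.

Lemma skew_comb a z w : skewsupp z -> skewsupp w -> skewsupp (a *: z + w).
Proof.
move=> Hz Hw p q; rewrite !ffunE.
have [Hz1 Hz2] := Hz p q; have [Hw1 Hw2] := Hw p q; split.
  by rewrite Hz1 Hw1 scalerN opprD.
by move=> npq; rewrite Hz2 // Hw2 // scaler0 addr0.
Qed.

Lemma skew_sum (I : Type) (s : seq I) (P : pred I) (c : I -> k) (z : I -> {ffun (T * T)%type -> k^o}) :
  (forall i, skewsupp (z i)) -> skewsupp (\sum_(i <- s | P i) c i *: z i).
Proof.
move=> H; elim/big_rec: _ => [|i w _ Hw]; first exact: skew0.
exact: skew_comb.
Qed.

Lemma skewZ a z : skewsupp z -> skewsupp (a *: z).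
Proof. by move=> Hz; rewrite -[a *: z]addr0; apply: skew_comb => //; exact: skew0. Qed.

Lemma Br_lin2 (x : {ffun T -> k^o}) a y w : Br r x (a *: y + w) = a *: Br r x y + Br r x w.
Proof.
apply/ffunP => [[p q]]; rewrite !ffunE /=.
case: (r p q); last by rewrite scaler0 addr0.
change (x p * (a * y q + w q) - x q * (a * y p + w p) = a * (x p * y q - x q * y p) + (x p * w q - x q * w p)).
ring.
Qed.

Lemma Br_sumr (x : {ffun T -> k^o}) (I : finType) (P : {pred I}) (c : I -> k) (y : I -> {ffun T -> k^o}) :
  Br r x (\sum_(i in P) c i *: y i) = \sum_(i in P) c i *: Br r x (y i).
Proof. by apply: lin_sum => a u w; apply: Br_lin2. Qed.

Lemma dlE (a x : T) : dl k a x = (x == a)%:R.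
Proof. by rewrite ffunE. Qed.

Lemma Br_dl0 (a c : T) : ~~ r a c -> Br r (dl k a) (dl k c) = 0.
Proof.
move=> nac; apply/ffunP => [[p q]]; rewrite BrE !dlE !ffunE.
case rpq: (r p q) => //.
have h1 : ((p == a) && (q == c)) = false.
  by apply/negP => /andP[/eqP ea /eqP ec]; subst; rewrite rpq in nac.
have h2 : ((q == a) && (p == c)) = false.
  by apply/negP => /andP[/eqP ea /eqP ec]; subst; rewrite sym rpq in nac.
by rewrite -!natrM !mulnb h1 h2 subrr.
Qed.

Lemma Zdec (two : (2%:R : k) != 0) (z : {ffun (T * T)%type -> k^o}) :
  skewsupp z -> z = 2^-1 *: \sum_(pq : T * T) z pq *: Br r (dl k pq.1) (dl k pq.2).
Proof.
move=> Hz; apply/ffunP => [[p q]].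
rewrite ffunE sum_ffunE.
have [Hs Hn] := Hz p q.
case: (boolP (r p q)) => rpq; last first.
  rewrite Hn // big1 ?scaler0 // => pq _.
  by rewrite ffunE BrE (negPf rpq) scaler0.
have E : forall pq : T * T, (z pq *: Br r (dl k pq.1) (dl k pq.2)) (p, q)
    = z pq * (pq == (p, q))%:R - z pq * (pq == (q, p))%:R.
  move=> [p1 p2]; rewrite ffunE BrE rpq !dlE /=.
  rewrite -!natrM !xpair_eqE /= (eq_sym p1 p) (eq_sym p2 q) (eq_sym p1 q) (eq_sym p2 p).
  by rewrite !mulnb -mulrBr.
rewrite (eq_bigr _ (fun pq _ => E pq)) sumrB !sum_delta Hs.
change (- z (q, p) = 2^-1 * (- z (q, p) - z (q, p))).
by field.
Qed.
End BrLemmas.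

Section Main2.
Variables (k : fieldType) (S S' : finType) (e : rel S) (e' : rel S').
Hypotheses (irr : irreflexive e) (sym : symmetric e) (irr' : irreflexive e') (sym' : symmetric e').
Variable f : {linear namb k S -> namb k S'}.
Hypothesis fn : forall x, in_n e x -> in_n e' (f x).
Hypothesis finj : forall x y, in_n e x -> in_n e y -> f x = f y -> x = y.
Hypothesis fsurj : forall y, in_n e' y -> exists2 x, in_n e x & f x = y.
Hypothesis fbr : forall x y, in_n e x -> in_n e y -> f (nbr e x y) = nbr e' (f x) (f y).
Hypothesis two : (2%:R : k) != 0.

Local Notation phi := (phiF f).
Local Notation psi := (psiF f).
Local Notation g1 := (g1F f).
Local Notation dl := (dl k).

Lemma in_nE (T : finType) (r : rel T) (x : namb k T) : in_n r x <-> skewsupp r x.2.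
Proof. by []. Qed.

Lemma inV (v : {ffun S -> k^o}) : in_n e (v, 0).
Proof. exact: skew0. Qed.

Lemma inV' (v : {ffun S' -> k^o}) : in_n e' (v, 0).
Proof. exact: skew0. Qed.

Lemma K1 v w : f (0, Br e v w) = (0, Br e' (phi v) (phi w)).
Proof. by rewrite -[(0, Br e v w)]/(nbr e (v, 0) (w, 0)) fbr; try exact: inV. Qed.

Lemma psiBr v w : psi (Br e v w) = Br e' (phi v) (phi w).
Proof. by rewrite /psiF K1. Qed.

Lemma g1Br v w : g1 (Br e v w) = 0.
Proof. by rewrite /g1F K1. Qed.

Lemma Br_inj v w : Br e' (phi v) (phi w) = 0 -> Br e v w = 0.
Proof.
move=> H.
have : f (0, Br e v w) = f 0 by rewrite K1 H linear0.
move/finj => /(_ (Br_skew sym _ _) (@skew0 k S e)).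
by move/(congr1 snd).
Qed.

Lemma phi_surj w : exists v, phi v = w.
Proof.
have [x xn fx] := fsurj (inV' w).
exists x.1.
have xE : x = (x.1, 0) + (0, x.2).
  have -> : ((x.1, 0) : namb k S) + (0, x.2) = (x.1 + 0, 0 + x.2) := erefl.
  by rewrite addr0 add0r; case: x {xn fx}.
have g0 : g1 x.2 = 0.
  rewrite (Zdec two xn) (linZ (g1_lin f)) (lin_sum (g1_lin f)) big1 ?scaler0 //.
  by move=> pq _; rewrite g1Br scaler0.
move: fx; rewrite {1}xE linearD => /(congr1 fst) /=.
by rewrite -/(g1F f x.2) g0 addr0.
Qed.

Lemma phi_inj0 v : phi v = 0 -> v = 0.
Proof.
move=> H.
set y := f (v, 0).
have yn : in_n e' y := fn (inV v).
have hu : forall g, exists u, phi u == dl g.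
  by move=> g; have [u <-] := phi_surj (dl g); exists u.
pose u g := xchoose (hu g).
have uP g : phi (u g) = dl g := eqP (xchooseP (hu g)).
pose Z0 := 2^-1 *: \sum_(pq : S' * S') y.2 pq *: Br e (u pq.1) (u pq.2).
have Z0n : in_n e (0, Z0).
  apply: skewZ; apply: skew_sum => pq; exact: Br_skew.
have fZ : f (0, Z0) = (0, y.2).
  rewrite [f (0, Z0)]surjective_pairing; congr pair.
    rewrite -/(g1F f Z0) /Z0 (linZ (g1_lin f)) (lin_sum (g1_lin f)) big1 ?scaler0 //.
    by move=> pq _; rewrite g1Br scaler0.
  rewrite -/(psiF f Z0) /Z0 (linZ (psi_lin f)) (lin_sum (psi_lin f)).
  under eq_bigr do rewrite psiBr !uP.
  by rewrite -(Zdec two yn).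
have fy : f (v, 0) = (0, y.2).
  by rewrite -/y [y]surjective_pairing -/(phiF f v) H.
have := finj (inV v) Z0n; rewrite fy fZ => /(_ erefl).
by move/(congr1 fst).
Qed.
End Main2.

Lemma sumT (V : nmodType) (T : finType) (F : T -> V) :
  \sum_(i in [set: T]) F i = \sum_i F i.
Proof. by apply: eq_bigl => i; rewrite in_setT. Qed.

Lemma ffun0E (k : fieldType) (T : finType) (x : T) : (0 : {ffun T -> k^o}) x = 0.
Proof. by rewrite ffunE. Qed.

Lemma sum_bij (I J : finType) (h : J -> I) (F : I -> nat) :
  bijective h -> (\sum_j F (h j) = \sum_i F i)%N.
Proof. by move=> hb; rewrite (reindex h (onW_bij _ hb)). Qed.

Section Matching.
Variables (k : fieldType) (T T' : finType) (L : {ffun T -> k^o} -> {ffun T' -> k^o}).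
Hypothesis Llin : forall a x y, L (a *: x + y) = a *: L x + L y.
Hypothesis Lsurj : forall w, exists v, L v = w.

Lemma Lexpand x g : L x g = \sum_a x a * L (dl k a) g.
Proof.
by rewrite {1}[x]ffun_expand (lin_sum Llin) sum_ffunE; apply: eq_bigr => a _; rewrite ffunE.
Qed.

Lemma card_surj : (#|T'| <= #|T|)%N.
Proof.
rewrite -cardsT -[#|T|]cardsT.
apply: (@indep_le k {ffun T' -> k^o} _ _ _ _ (fun g => dl k g) (fun a => L (dl k a))).
  move=> c H i _.
  have H' : (\sum_(j in [set: T']) c j *: dl k j : {ffun T' -> k^o}) = 0 := H.
  have := congr1 (fun h : {ffun T' -> k^o} => h i) H'.
  rewrite sum_ffunE sumT => Hs.
  rewrite -(ffun0E k i) -{}Hs -[LHS](sum_delta c i).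
  by apply: eq_bigr => j _; rewrite ffunE dlE eq_sym.
move=> i _; have [v <-] := Lsurj (dl k i); exists v.
by rewrite sumT {1}[v]ffun_expand (lin_sum Llin).
Qed.

Hypothesis card : #|T| = #|T'|.

Lemma matching : exists s : T' -> T, injective s /\ forall g, L (dl k (s g)) g != 0.
Proof.
pose n := #|T'|.
pose col (j : 'I_n) : T := enum_val (cast_ord (esym card) j).
pose A : 'M[k]_n := \matrix_(i, j) L (dl k (col j)) (enum_val i).
have detA : \det A != 0.
  apply/negP => /det0P [v v0 vA].
  have [i0 Hi0] : exists i0, v 0 i0 != 0.
    apply/existsP; apply: contraR v0 => /existsPn H; apply/eqP/rowP => i.
    by rewrite mxE; apply/eqP/negPn/H.
  have [x Lx] := Lsurj (dl k (enum_val i0)).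
  have E1 : \sum_i v 0 i * L x (enum_val i) = v 0 i0.
    rewrite Lx -[RHS](sum_delta (v 0)); apply: eq_bigr => i _.
    by rewrite dlE (inj_eq enum_val_inj).
  have E2 : \sum_i v 0 i * L x (enum_val i) = 0.
    under eq_bigr do rewrite Lexpand big_distrr /=.
    rewrite exchange_big /= big1 // => a _.
    have ja : col (cast_ord card (enum_rank a)) = a by rewrite /col cast_ordK enum_rankK.
    transitivity (x a * (v *m A) 0 (cast_ord card (enum_rank a))).
      rewrite mxE big_distrr /=; apply: eq_bigr => i _.
      by rewrite mxE ja mulrCA.
    by rewrite vA mxE mulr0.
  by move: Hi0; rewrite -E1 E2 eqxx.
have [s Hs] : exists s : 'S_n, \prod_i A i (s i) != 0.
  case: (pickP (fun s : 'S_n => \prod_i A i (s i) != 0)) => [s Hs|H0]; first by exists s.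
  move: detA; rewrite /determinant big1 ?eqxx // => s _.
  by rewrite (eqP (negbFE (H0 s))) mulr0.
exists (fun g => col (s (enum_rank g))); split.
  by move=> g1 g2 /enum_val_inj /cast_ord_inj /perm_inj /enum_rank_inj.
move=> g; move/prodf_neq0: Hs => /(_ (enum_rank g) isT).
by rewrite mxE enum_rankK.
Qed.
End Matching.

Lemma sum_delta_in (k : fieldType) (T : finType) (P : {pred T}) (F : T -> k) x :
  \sum_(b in P) F b * (x == b)%:R = if x \in P then F x else 0.
Proof.
case: ifP => xP.
  rewrite (bigD1 x) //= eqxx mulr1 big1 ?addr0 // => b /andP[_ nbx].
  by rewrite eq_sym (negPf nbx) mulr0.
apply: big1 => b bP.
have /negPf-> : x != b by apply: contraFN xP => /eqP ->.
by rewrite mulr0.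
Qed.

Lemma eval_comb (k : fieldType) (I A : finType) (P : {pred I}) (c : I -> k)
   (X : I -> {ffun A -> k^o}) :
  \sum_(b in P) c b *: X b = 0 -> forall q, \sum_(b in P) c b * X b q = 0.
Proof.
move=> H q; have := congr1 (fun h : {ffun A -> k^o} => h q) H.
rewrite sum_ffunE => Hs.
transitivity ((0 : {ffun A -> k^o}) q); last exact: ffun0E.
rewrite -{}Hs; apply: eq_bigr => j _; by rewrite ffunE.
Qed.

Definition degr (T : finType) (r : rel T) (a : T) := #|[set b | r a b]|.

Section Main3.
Variables (k : fieldType) (S S' : finType) (e : rel S) (e' : rel S').
Hypotheses (irr : irreflexive e) (sym : symmetric e) (irr' : irreflexive e') (sym' : symmetric e').
Variable f : {linear namb k S -> namb k S'}.
Hypothesis fn : forall x, in_n e x -> in_n e' (f x).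
Hypothesis finj : forall x y, in_n e x -> in_n e y -> f x = f y -> x = y.
Hypothesis fsurj : forall y, in_n e' y -> exists2 x, in_n e x & f x = y.
Hypothesis fbr : forall x y, in_n e x -> in_n e y -> f (nbr e x y) = nbr e' (f x) (f y).
Hypothesis two : (2%:R : k) != 0.

Local Notation phi := (phiF f).
Local Notation psi := (psiF f).
Local Notation dl := (dl k).


Lemma phi_inj : injective phi.
Proof.
move=> x y H; apply/eqP; rewrite -subr_eq0; apply/eqP.
apply: (phi_inj0 sym fn finj fsurj fbr two).
by rewrite addrC -scaleN1r (phi_lin f) H scaleN1r addNr.
Qed.

Lemma hu g : exists v, phi v == dl g.
Proof. by have [v <-] := phi_surj fsurj fbr two (dl g); exists v. Qed.

Definition u g := xchoose (hu g).
Lemma uP g : phi (u g) = dl g.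
Proof. exact: eqP (xchooseP (hu g)). Qed.

Definition Lu (c : {ffun S' -> k^o}) : {ffun S -> k^o} := \sum_g c g *: u g.

Lemma Lu_lin a c d : Lu (a *: c + d) = a *: Lu c + Lu d.
Proof.
rewrite /Lu scaler_sumr -big_split /=; apply: eq_bigr => g _.
by rewrite !ffunE scalerDl scalerA.
Qed.

Lemma Lu_dl g : Lu (dl g) = u g.
Proof.
rewrite /Lu (bigD1 g) //= dlE eqxx scale1r big1 ?addr0 // => h nhg.
by rewrite dlE (negPf nhg) scale0r.
Qed.

Lemma phi_Lu c : phi (Lu c) = c.
Proof.
rewrite /Lu (lin_sum (phi_lin f)) {2}[c]ffun_expand.
by apply: eq_bigr => g _; rewrite uP.
Qed.

Lemma Lu_surj v : exists c, Lu c = v.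
Proof. by exists (phi v); apply: phi_inj; rewrite phi_Lu. Qed.

Lemma card_eq : #|S| = #|S'|.
Proof.
apply/eqP; rewrite eqn_leq (card_surj (Lu_lin) Lu_surj).
by rewrite (card_surj (phi_lin f) (phi_surj fsurj fbr two)).
Qed.

Lemma psi0 : psi 0 = 0.
Proof. exact: lin0 (psi_lin f). Qed.

Lemma span_phi (a : S) (b : S') :
  Br e' (phi (dl a)) (dl b)
  = \sum_(c in [set c | e a c]) u b c *: psi (Br e (dl a) (dl c)).
Proof.
rewrite -[dl b]uP -(psiBr fbr) {1}[u b]ffun_expand.
rewrite Br_sumr (lin_sum (psi_lin f)) [RHS]big_mkcond /=.
apply: eq_bigr => c _; case: ifP => // /negbT; rewrite inE => nac.
by rewrite Br_dl0 // psi0 scaler0.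
Qed.

Lemma degF (a : S) (g : S') : phi (dl a) g != 0 -> (degr e' g <= degr e a)%N.
Proof.
move=> yg.
apply: (@indep_le k {ffun (S' * S')%type -> k^o} _ _ _ _
  (fun b => Br e' (phi (dl a)) (dl b)) (fun c => psi (Br e (dl a) (dl c)))).
  move=> c H b0 Hb0; move: (eval_comb H (g, b0)).
  rewrite inE in Hb0.
  rewrite (eq_bigr (fun b => c b * phi (dl a) g * (b0 == b)%:R)); last first.
    move=> b; rewrite inE => Hb; rewrite BrE /= Hb0 !dlE.
    have /negPf-> : g != b by apply: contraTneq Hb => ->; rewrite irr'.
    by rewrite mulr0 subr0 mulrA.
  rewrite sum_delta_in inE Hb0 => /eqP; rewrite mulf_eq0 (negPf yg) orbF.
  by move/eqP.
by move=> b _; exists (u b); rewrite span_phi.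
Qed.

Lemma degFs (a : S) (g rho eps : S') : phi (dl a) g != 0 -> phi (dl a) rho != 0 ->
  eps != g -> ~~ e' g eps -> e' rho eps -> (degr e' g < degr e a)%N.
Proof.
move=> yg yr neg ngeps reps.
have cardP : #|eps |: [set b | e' g b]| = (degr e' g).+1.
  by rewrite cardsU1 inE ngeps.
rewrite -cardP.
apply: (@indep_le k {ffun (S' * S')%type -> k^o} _ _ _ _
  (fun b => Br e' (phi (dl a)) (dl b)) (fun c => psi (Br e (dl a) (dl c)))).
  move=> c H.
  have Hn : forall b0, e' g b0 -> c b0 = 0.
    move=> b0 Hb0; move: (eval_comb H (g, b0)).
    rewrite (eq_bigr (fun b => c b * phi (dl a) g * (b0 == b)%:R)); last first.
      move=> b Hb; rewrite BrE /= Hb0 !dlE.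
      have /negPf-> : g != b.
        move: Hb; rewrite !inE => /orP[/eqP-> | Hb]; first by rewrite eq_sym.
        by apply: contraTneq Hb => ->; rewrite irr'.
      by rewrite mulr0 subr0 mulrA.
    rewrite sum_delta_in !inE Hb0 orbT => /eqP; rewrite mulf_eq0 (negPf yg) orbF.
    by move/eqP.
  move=> b; rewrite !inE => /orP[/eqP-> | ]; last exact: Hn.
  move: (eval_comb H (rho, eps)).
  rewrite (eq_bigr (fun b => c b * phi (dl a) rho * (eps == b)%:R
                            - c b * phi (dl a) eps * (rho == b)%:R)); last first.
    by move=> b1 _; rewrite BrE /= reps !dlE mulrBr !mulrA.
  rewrite sumrB !sum_delta_in !inE eqxx /=.
  rewrite (_ : (if (rho == eps) || e' g rho then _ else _) = 0); last first.
    case: ifP => // /orP[/eqP rE|]; first by move: reps; rewrite rE irr'.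
    by move/Hn ->; rewrite mul0r.
  rewrite subr0 => /eqP; rewrite mulf_eq0 (negPf yr) orbF.
  by move/eqP.
by move=> b _; exists (u b); rewrite span_phi.
Qed.

Lemma degI (a : S) (g : S') : u g a != 0 -> (degr e a <= degr e' g)%N.
Proof.
move=> ua.
apply: (@indep_le k {ffun (S' * S')%type -> k^o} _ _ _ _
  (fun c => psi (Br e (u g) (dl c))) (fun b => Br e' (dl g) (dl b))).
  move=> d H c0 Hc0.
  pose w := \sum_(c in [set c | e a c]) d c *: dl c.
  have wE : forall x, w x = if x \in [set c | e a c] then d x else 0.
    move=> x; rewrite /w sum_ffunE -sum_delta_in; apply: eq_bigr => c _.
    by rewrite ffunE dlE.
  have Bw : Br e (u g) w = 0.
    apply: (Br_inj sym finj fbr).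
    by rewrite -(psiBr fbr) /w Br_sumr (lin_sum (psi_lin f)).
  have := congr1 (fun h : {ffun (S * S)%type -> k^o} => h (a, c0)) Bw.
  rewrite inE in Hc0.
  rewrite BrE /= Hc0 ffun0E !wE !inE Hc0 irr mulr0 subr0 => /eqP.
  by rewrite mulf_eq0 (negPf ua) /= => /eqP.
move=> c _; exists (fun b => phi (dl c) b).
rewrite (psiBr fbr) uP {1}[phi (dl c)]ffun_expand Br_sumr [RHS]big_mkcond /=.
apply: eq_bigr => b _; case: ifP => // /negbT; rewrite inE => ngb.
by rewrite Br_dl0 // scaler0.
Qed.

Lemma exists_tau : exists t : S -> S', injective t /\ forall a, u (t a) a != 0.
Proof.
have [t [ti Ht]] := matching Lu_lin Lu_surj (esym card_eq).
by exists t; split => // a; rewrite -Lu_dl.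
Qed.

Lemma deg_eq (s : S' -> S) : injective s -> (forall g, phi (dl (s g)) g != 0) ->
  forall g, degr e' g = degr e (s g).
Proof.
move=> si Hs.
have [t [ti Ht]] := exists_tau.
have sbij : bijective s by apply: inj_card_bij => //; rewrite card_eq.
have tbij : bijective t by apply: inj_card_bij => //; rewrite card_eq.
have le1 : forall g, (degr e' g <= degr e (s g))%N := fun g => degF (Hs g).
have le2 : forall a, (degr e a <= degr e' (t a))%N := fun a => degI (Ht a).
have sumE : (\sum_g degr e' g = \sum_g degr e (s g))%N.
  apply/eqP; rewrite eqn_leq (leq_sum _ (fun g _ => le1 g)) /=.
  rewrite (sum_bij _ sbij).
  apply: (leq_trans (leq_sum _ (fun a _ => le2 a))).
  by rewrite (sum_bij _ tbij).
have := leqif_sum (fun g (_ : predT g) => leqif_eq (le1 g)).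
case=> _; rewrite sumE eqxx => /esym /forallP H g.
by apply/eqP; have := H g.
Qed.

Lemma hom (s : S' -> S) : injective s -> (forall g, phi (dl (s g)) g != 0) ->
  forall g d, e' g d -> e (s g) (s d).
Proof.
move=> si Hs g d gd.
have degE := deg_eq si Hs.
apply/negPn/negP => nab.
set a := s g in nab degE *; set b := s d in nab *.
pose ya := phi (dl a); pose yb := phi (dl b).
have yag : ya g != 0 := Hs g.
have ybd : yb d != 0 := Hs d.
have ab : a != b by apply: contraTneq gd => /si ->; rewrite irr'.
have Byab : Br e' ya yb = 0.
  by rewrite /ya /yb -(psiBr fbr) Br_dl0 // psi0.
have Bpt : forall x, e' g x -> ya g * yb x = ya x * yb g.
  move=> x gx; have := congr1 (fun h : {ffun (S' * S')%type -> k^o} => h (g, x)) Byab.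
  by rewrite BrE /= gx ffun0E => /eqP; rewrite subr_eq0 => /eqP.
have yad : ya d != 0.
  apply/eqP => h; move: (Bpt d gd); rewrite h mul0r => /eqP.
  by rewrite mulf_eq0 (negPf yag) (negPf ybd).
have ybg : yb g != 0.
  apply/eqP => h; move: (Bpt d gd); rewrite h mulr0 => /eqP.
  by rewrite mulf_eq0 (negPf yag) (negPf ybd).
have starG : forall rho eps, ya rho != 0 -> e' rho eps -> (eps == g) || e' g eps.
  move=> rho eps yr re; apply/negPn/negP; rewrite negb_or => /andP[neg nge].
  by have := degFs yag yr neg nge re; rewrite -degE ltnn.
have starD : forall rho eps, yb rho != 0 -> e' rho eps -> (eps == d) || e' d eps.
  move=> rho eps yr re; apply/negPn/negP; rewrite negb_or => /andP[neg nge].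
  by have := degFs ybd yr neg nge re; rewrite -(deg_eq si Hs d) ltnn.
pose lam := yb g / ya g.
pose z : {ffun S' -> k^o} := yb - lam *: ya.
have zE : forall x, z x = yb x - lam * ya x by move=> x; rewrite !ffunE.
have z0 : forall x, (x == g) || e' g x -> z x = 0.
  move=> x /orP[/eqP-> | gx]; rewrite zE /lam.
    by rewrite divfK // subrr.
  rewrite -[yb x](mulKf yag) Bpt //.
  by ring.
have lam0 : lam != 0 by rewrite /lam mulf_neq0 // invr_eq0.
have Nsupp : forall eps beta, z eps != 0 -> e' eps beta -> (beta != d) && e' g beta.
  move=> eps beta zeps eb.
  have nge : ~~ ((eps == g) || e' g eps).
    by apply: contra zeps => /z0 ->.
  have yab : (ya eps != 0) || (yb eps != 0).
    apply: contraR zeps; rewrite negb_or !negbK => /andP[/eqP h1 /eqP h2].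
    by rewrite zE h1 h2 mulr0 subr0.
  have gbeta : (beta == g) || e' g beta.
    case/orP: yab => [ye | ye]; first exact: starG ye eb.
    case/orP: (starD _ _ ye eb) => [/eqP-> | db]; first by rewrite gd orbT.
    exact: starG yad db.
  case/orP: gbeta => [/eqP bg | gb].
    by move: nge; rewrite bg in eb; rewrite sym' eb orbT.
  rewrite gb andbT; apply/eqP => bd; rewrite bd in eb.
  by move: nge; rewrite (starG _ _ yad); last by rewrite sym'.
pose Q := [set beta | e' g beta] :\ d.
have Bz0 : forall beta, beta \notin Q -> Br e' z (dl beta) = 0.
  move=> beta nbQ; apply/ffunP => [[p q]]; rewrite BrE !dlE ffun0E /=.
  case epq: (e' p q) => //.
  have h1 : z p * (q == beta)%:R = 0.
    case: (eqVneq q beta) => [qb|]; last by rewrite mulr0.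
    case: (eqVneq (z p) 0) => [->|zp]; first by rewrite mul0r.
    by move: nbQ; rewrite -qb !inE (Nsupp _ _ zp epq).
  have h2 : z q * (p == beta)%:R = 0.
    case: (eqVneq p beta) => [pb|]; last by rewrite mulr0.
    case: (eqVneq (z q) 0) => [->|zq]; first by rewrite mul0r.
    have eqp : e' q p by rewrite sym'.
    by move: nbQ; rewrite -pb !inE (Nsupp _ _ zq eqp).
  by rewrite h1 h2 subrr.
have Hle : (#|[set c | e a c]| <= #|Q|)%N.
  apply: (@indep_le k {ffun (S' * S')%type -> k^o} _ _ _ _
    (fun c => psi (Br e (dl b - lam *: dl a) (dl c))) (fun beta => Br e' z (dl beta))).
    move=> dd H c0 Hc0.
    pose x : {ffun S -> k^o} := dl b - lam *: dl a.
    pose w := \sum_(c in [set c | e a c]) dd c *: dl c.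
    have wE : forall y, w y = if y \in [set c | e a c] then dd y else 0.
      move=> y; rewrite /w sum_ffunE -sum_delta_in; apply: eq_bigr => c _.
      by rewrite ffunE dlE.
    have Bw : Br e x w = 0.
      apply: (Br_inj sym finj fbr).
      rewrite -(psiBr fbr) /w Br_sumr (lin_sum (psi_lin f)).
      exact: H.
    have := congr1 (fun h : {ffun (S * S)%type -> k^o} => h (a, c0)) Bw.
    rewrite inE in Hc0.
    rewrite BrE /= Hc0 ffun0E !wE !inE Hc0 irr mulr0 subr0.
    rewrite /x !ffunE eqxx (negPf ab) mulr0n mulr1n sub0r.
    change (- (lam * 1) * dd c0 = 0 -> dd c0 = 0).
    rewrite mulr1 mulNr => /eqP.
    by rewrite oppr_eq0 mulf_eq0 (negPf lam0) /= => /eqP.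
  move=> c _; exists (fun beta => phi (dl c) beta).
  rewrite (psiBr fbr).
  have -> : phi (dl b - lam *: dl a) = z.
    by rewrite addrC -scaleNr (phi_lin f) scaleNr addrC.
  rewrite {1}[phi (dl c)]ffun_expand Br_sumr [RHS]big_mkcond /=.
  apply: eq_bigr => beta _; case: ifP => // /negbT nbQ.
  by rewrite Bz0 // scaler0.
have cD := cardsD1 d [set beta | e' g beta].
rewrite inE gd in cD.
have := degE g; rewrite /degr cD => HE.
by move: Hle; rewrite -HE add1n ltnn.
Qed.
End Main3.

Theorem theorem1p1 (k : fieldType) (S S' : finType) (e : rel S) (e' : rel S') :
  2%N \notin [pchar k]%R ->
  simple_graph e -> simple_graph e' ->
  n_lie_iso k e e' -> graph_iso e e'.
Proof.
move=> ch [irr sym] [irr' sym'] [f [fn finj fsurj fbr]].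
have two : (2%:R : k) != 0.
  by apply: contra ch => /eqP h; rewrite inE /= h eqxx.
have ce := card_eq sym fn finj fsurj fbr two.
have [s [si Hs]] := matching (phi_lin f) (phi_surj fsurj fbr two) ce.
have sbij : bijective s by apply: inj_card_bij => //; rewrite ce.
have [sinv sK sinvK] := sbij.
have degE := deg_eq irr sym irr' sym' fn finj fsurj fbr two si Hs.
have homs := hom irr sym irr' sym' fn finj fsurj fbr two si Hs.
have iso : forall g d, e' g d = e (s g) (s d).
  move=> g d; apply/idP/idP; first exact: homs.
  move=> Hsd.
  have sub : s @: [set x | e' g x] \subset [set y | e (s g) y].
    apply/subsetP => y /imsetP [x]; rewrite inE => gx ->; rewrite inE; exact: homs.
  have cardE : #|s @: [set x | e' g x]| = #|[set y | e (s g) y]|.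
    by rewrite card_imset //; apply: degE.
  have eqS : s @: [set x | e' g x] = [set y | e (s g) y].
    by apply/eqP; rewrite eqEcard sub cardE leqnn.
  have : s d \in s @: [set x | e' g x] by rewrite eqS inE.
  by case/imsetP => x; rewrite inE => gx /si ->.
exists sinv; split; first by exists s.
by move=> a b; rewrite iso !sinvK.
Qed.
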